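(* Let $f:\mathbb{R}^n\to\mathbb{R}\cup\{+\infty\}$ and $g:\mathbb{R}^m\to\mathbb{R}\cup\{+\infty\}$ be proper, closed, convex functions, and let $A\in\mathbb{R}^{p\times n}$, $B\in\mathbb{R}^{p\times m}$, $c\in\mathbb{R}^p$. Consider the problem $$\min_{x\in\mathbb{R}^n,\,z\in\mathbb{R}^m} f(x)+g(z)\quad\text{subject to}\quad Ax+Bz=c,$$ and assume that the Lagrangian $\mathcal{L}_0(x,z,y)=f(x)+g(z)+y^T(Ax+Bz-c)$ has a saddle point (the min-max and max-min of $\mathcal{L}_0$ over $(x,z)\in\mathbb{R}^n\times\mathbb{R}^m$, $y\in\mathbb{R}^p$ coincide and are attained). Let $$M_0=\begin{pmatrix}0 & 0 & A^T\\ 0 & 0 & B^T\\ -A & -B & 0_{p\times p}\end{pmatrix},$$ let $L>0$ satisfy $\|M_0\|_2\le L$, and let $\eta\in(0,\frac{1}{2L})$. For arbitrary initial points $x_0,x_{-1}\in\mathbb{R}^n$, $z_0,z_{-1}\in\mathbb{R}^m$, $y_0,y_{-1}\in\mathbb{R}^p$, define for $k=0,1,2,\dots$: $$\hat x_k=x_k-2\eta A^Ty_k+\eta A^Ty_{k-1},\qquad \hat z_k=z_k-2\eta B^Ty_k+\eta B^Ty_{k-1},$$ $$x_{k+1}=\arg\min_{u\in\mathbb{R}^n}\Big(\eta f(u)+\tfrac12\|u-\hat x_k\|_2^2\Big),\qquad z_{k+1}=\arg\min_{r\in\mathbb{R}^m}\Big(\eta g(r)+\tfrac12\|r-\hat z_k\|_2^2\Big),$$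 $$y_{k+1}=y_k+2\eta Ax_k+2\eta Bz_k-\eta Ax_{k-1}-\eta Bz_{k-1}-\eta c.$$ Then $\{x_k\}$ and $\{z_k\}$ converge, and their limit $(x^*,z^* )$ is a solution of the optimization problem.
   Context: $\|\cdot\|_2$ denotes the Euclidean norm on vectors and the spectral norm (largest singular value) on matrices. *)

(* Defs.v *)
From HB Require Import structures.
From mathcomp Require Import all_boot all_order all_algebra.
From mathcomp Require Import all_classical all_reals all_analysis.
Set Implicit Arguments. Unset Strict Implicit. Unset Printing Implicit Defensive.
Import Order.TTheory GRing.Theory Num.Theory.
Import numFieldNormedType.Exports.
Local Open Scope classical_set_scope.
Local Open Scope ring_scope.

Definition enorm (R : realType) (n : nat) (v : 'cV[R]_n) : R :=
  Num.sqrt (\sum_(i < n) v i ord0 ^+ 2).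

Definition spec_norm (R : realType) (p q : nat) (M : 'M[R]_(p, q)) : R :=
  sup [set enorm (M *m v) | v in [set v : 'cV[R]_q | enorm v <= 1]].

Definition proper_fun (R : realType) (n : nat) (f : 'cV[R]_n -> \bar R) : Prop :=
  (forall x, f x != -oo%E) /\ (exists x, f x \is a fin_num).

(* Convexity (for functions never equal to -oo; 0 * +oo = 0 by convention). *)
Definition convex_efun (R : realType) (n : nat) (f : 'cV[R]_n -> \bar R) : Prop :=
  forall (x y : 'cV[R]_n) (t : R), 0 <= t <= 1 ->
    (f (t *: x + (1 - t) *: y)%R <= t%:E * f x + (1 - t)%:E * f y)%E.

(* Closed = lower semicontinuous (closed epigraph). *)
Definition closed_fun (R : realType) (n : nat) (f : 'cV[R]_n -> \bar R) : Prop :=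
  lower_semicontinuous f.

Definition pcc (R : realType) (n : nat) (f : 'cV[R]_n -> \bar R) : Prop :=
  [/\ proper_fun f, closed_fun f & convex_efun f].

Definition is_prox_point (R : realType) (n : nat) (h : 'cV[R]_n -> \bar R)
    (eta : R) (w u : 'cV[R]_n) : Prop :=
  forall u', (eta%:E * h u + (2^-1 * enorm (u - w)%R ^+ 2)%:E
              <= eta%:E * h u' + (2^-1 * enorm (u' - w)%R ^+ 2)%:E)%E.

Definition lagr0 (R : realType) (n m p : nat)
    (f : 'cV[R]_n -> \bar R) (g : 'cV[R]_m -> \bar R)
    (A : 'M[R]_(p, n)) (B : 'M[R]_(p, m)) (c : 'cV[R]_p)
    (x : 'cV[R]_n) (z : 'cV[R]_m) (y : 'cV[R]_p) : \bar R :=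
  (f x + g z + ((y^T *m (A *m x + B *m z - c)) ord0 ord0)%:E)%E.

Definition has_saddle_point (R : realType) (n m p : nat)
    (f : 'cV[R]_n -> \bar R) (g : 'cV[R]_m -> \bar R)
    (A : 'M[R]_(p, n)) (B : 'M[R]_(p, m)) (c : 'cV[R]_p) : Prop :=
  exists xs zs ys, forall x z y,
    (lagr0 f g A B c xs zs y <= lagr0 f g A B c xs zs ys)%E /\
    (lagr0 f g A B c xs zs ys <= lagr0 f g A B c x z ys)%E.

Definition M0 (R : realType) (n m p : nat) (A : 'M[R]_(p, n)) (B : 'M[R]_(p, m))
  : 'M[R]_(n + m + p) :=
  block_mx 0 (col_mx A^T B^T) (- row_mx A B) 0.

Definition is_solution (R : realType) (n m p : nat)
    (f : 'cV[R]_n -> \bar R) (g : 'cV[R]_m -> \bar R)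
    (A : 'M[R]_(p, n)) (B : 'M[R]_(p, m)) (c : 'cV[R]_p)
    (xs : 'cV[R]_n) (zs : 'cV[R]_m) : Prop :=
  A *m xs + B *m zs = c /\
  forall x z, A *m x + B *m z = c -> (f xs + g zs <= f x + g z)%E.

(* Main.v *)
Require Import Defs.
From HB Require Import structures.
From mathcomp Require Import all_boot all_order all_algebra.
From mathcomp Require Import all_classical all_reals all_analysis.
From mathcomp Require Import ring lra.
Set Implicit Arguments. Unset Strict Implicit. Unset Printing Implicit Defensive.
Import Order.TTheory GRing.Theory Num.Theory.
Import numFieldNormedType.Exports.
Local Open Scope classical_set_scope.
Local Open Scope ring_scope.
Definition dot (R : realType) k (u v : 'cV[R]_k) : R := (u^T *m v) ord0 ord0.

Lemma dotE (R : realType) k (u v : 'cV[R]_k) :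
  dot u v = \sum_i u i ord0 * v i ord0.
Proof. by rewrite /dot mxE; apply: eq_bigr => i _; rewrite mxE. Qed.

Lemma dotC (R : realType) k (u v : 'cV[R]_k) : dot u v = dot v u.
Proof. by rewrite !dotE; apply: eq_bigr => i _; rewrite mulrC. Qed.

Lemma dotDl (R : realType) k (u v w : 'cV[R]_k) : dot (u + v) w = dot u w + dot v w.
Proof. by rewrite !dotE -big_split; apply: eq_bigr => i _; rewrite mxE mulrDl. Qed.

Lemma dotNl (R : realType) k (u w : 'cV[R]_k) : dot (- u) w = - dot u w.
Proof. by rewrite !dotE -sumrN; apply: eq_bigr => i _; rewrite mxE mulNr. Qed.

Lemma dotZl (R : realType) k (a : R) (u w : 'cV[R]_k) : dot (a *: u) w = a * dot u w.
Proof. by rewrite !dotE mulr_sumr; apply: eq_bigr => i _; rewrite mxE mulrA. Qed.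

Lemma dotDr (R : realType) k (u v w : 'cV[R]_k) : dot w (u + v) = dot w u + dot w v.
Proof. by rewrite dotC dotDl !(dotC w). Qed.
Lemma dotNr (R : realType) k (u w : 'cV[R]_k) : dot w (- u) = - dot w u.
Proof. by rewrite dotC dotNl dotC. Qed.
Lemma dotZr (R : realType) k (a : R) (u w : 'cV[R]_k) : dot w (a *: u) = a * dot w u.
Proof. by rewrite dotC dotZl dotC. Qed.
Lemma dotBl (R : realType) k (u v w : 'cV[R]_k) : dot (u - v) w = dot u w - dot v w.
Proof. by rewrite dotDl dotNl. Qed.
Lemma dotBr (R : realType) k (u v w : 'cV[R]_k) : dot w (u - v) = dot w u - dot w v.
Proof. by rewrite dotDr dotNr. Qed.
Lemma dot0l (R : realType) k (w : 'cV[R]_k) : dot 0 w = 0.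
Proof. by rewrite dotE big1 // => i _; rewrite mxE mul0r. Qed.
Lemma dot0r (R : realType) k (w : 'cV[R]_k) : dot w 0 = 0.
Proof. by rewrite dotC dot0l. Qed.

Lemma dot_mulmx (R : realType) k l (M : 'M[R]_(k, l)) u v :
  dot (M *m u) v = dot u (M^T *m v).
Proof. by rewrite /dot trmx_mul mulmxA. Qed.

Lemma dot_col (R : realType) k l (a c : 'cV[R]_k) (b d : 'cV[R]_l) :
  dot (col_mx a b) (col_mx c d) = dot a c + dot b d.
Proof.
rewrite !dotE big_split_ord /=; congr (_ + _); apply: eq_bigr => i _.
  by rewrite !col_mxEu.
by rewrite !col_mxEd.
Qed.

Lemma dot_ge0 (R : realType) k (u : 'cV[R]_k) : 0 <= dot u u.
Proof. by rewrite dotE sumr_ge0 // => i _; rewrite -expr2 sqr_ge0. Qed.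

Lemma enormE (R : realType) k (u : 'cV[R]_k) : enorm u = Num.sqrt (dot u u).
Proof. by rewrite /enorm dotE; congr Num.sqrt; apply: eq_bigr => i _; rewrite expr2. Qed.

Lemma enorm_ge0 (R : realType) k (u : 'cV[R]_k) : 0 <= enorm u.
Proof. by rewrite enormE sqrtr_ge0. Qed.

Lemma enorm_sq (R : realType) k (u : 'cV[R]_k) : enorm u ^+ 2 = dot u u.
Proof. by rewrite enormE sqr_sqrtr // dot_ge0. Qed.

Lemma dot_eq0 (R : realType) k (u : 'cV[R]_k) : dot u u = 0 -> u = 0.
Proof.
rewrite dotE => /eqP; rewrite psumr_eq0 => [/allP H|i _]; last first.
  by rewrite -expr2 sqr_ge0.
apply/matrixP => i j; rewrite ord1 mxE.
have := H i (mem_index_enum _); rewrite /= mulf_eq0 orbb => /eqP //.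
Qed.

Lemma cauchy_schwarz (R : realType) k (u v : 'cV[R]_k) :
  dot u v ^+ 2 <= dot u u * dot v v.
Proof.
have [v0|vn0] := eqVneq (dot v v) 0.
  by rewrite v0 (dot_eq0 v0) dot0r expr0n /= mulr0.
have vp : 0 < dot v v by rewrite lt_def vn0 dot_ge0.
set t := dot u v / dot v v.
have H := dot_ge0 (u - t *: v).
rewrite dotBl !dotBr !dotZl !dotZr (dotC v u) in H.
have tb : t * dot v v = dot u v by rewrite /t mulfVK.
nra.
Qed.

Lemma dot_le (R : realType) k (u v : 'cV[R]_k) :
  `|dot u v| <= enorm u * enorm v.
Proof.
rewrite !enormE -sqrtrM ?dot_ge0 // -sqrtr_sqr ler_sqrt ?cauchy_schwarz //.
by rewrite mulr_ge0 ?dot_ge0.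
Qed.

Lemma dot_le' (R : realType) k (u v : 'cV[R]_k) :
  dot u v <= enorm u * enorm v.
Proof. exact: le_trans (ler_norm _) (dot_le u v). Qed.

Lemma enormD (R : realType) k (u v : 'cV[R]_k) :
  enorm (u + v) <= enorm u + enorm v.
Proof.
rewrite -(ler_pXn2r (n := 2)) ?nnegrE ?addr_ge0 ?enorm_ge0 //.
rewrite enorm_sq dotDl !dotDr (dotC v u) sqrrD !enorm_sq.
have := dot_le' u v; nra.
Qed.

Lemma enormZ (R : realType) k (a : R) (u : 'cV[R]_k) :
  enorm (a *: u) = `|a| * enorm u.
Proof.
by rewrite !enormE dotZl dotZr mulrA -expr2 sqrtrM ?sqr_ge0 // sqrtr_sqr.
Qed.

Lemma enormN (R : realType) k (u : 'cV[R]_k) : enorm (- u) = enorm u.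
Proof. by rewrite !enormE dotNl dotNr opprK. Qed.

Lemma enormB (R : realType) k (u v : 'cV[R]_k) :
  enorm (u - v) <= enorm u + enorm v.
Proof. by rewrite -(enormN v) enormD. Qed.

Lemma enorm_col_sq (R : realType) k l (a : 'cV[R]_k) (b : 'cV[R]_l) :
  enorm (col_mx a b) ^+ 2 = enorm a ^+ 2 + enorm b ^+ 2.
Proof. by rewrite !enorm_sq dot_col. Qed.

Lemma enorm_colu (R : realType) k l (a : 'cV[R]_k) (b : 'cV[R]_l) :
  enorm a <= enorm (col_mx a b).
Proof.
rewrite -(ler_pXn2r (n := 2)) ?nnegrE ?enorm_ge0 // enorm_col_sq.
by rewrite lerDl sqr_ge0.
Qed.

Lemma enorm_cold (R : realType) k l (a : 'cV[R]_k) (b : 'cV[R]_l) :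
  enorm b <= enorm (col_mx a b).
Proof.
rewrite -(ler_pXn2r (n := 2)) ?nnegrE ?enorm_ge0 // enorm_col_sq.
by rewrite lerDr sqr_ge0.
Qed.

Lemma enorm_entry (R : realType) k (u : 'cV[R]_k) i : `|u i ord0| <= enorm u.
Proof.
rewrite /enorm -sqrtr_sqr ler_sqrt; last by rewrite sumr_ge0 // => j _; rewrite sqr_ge0.
rewrite (bigD1 i) //= lerDl sumr_ge0 // => j _; exact: sqr_ge0.
Qed.

Lemma mxnorm_le_enorm (R : realType) k (u : 'cV[R]_k) : `|u| <= enorm u.
Proof.
change (mx_norm u <= enorm u); rewrite mx_normrE; apply: bigmax_le => [|[i j] _ /=].
  exact: enorm_ge0.
by rewrite ord1 enorm_entry.
Qed.


Lemma mulmx_entry (R : realType) a b (M : 'M[R]_(a, b)) (v : 'cV[R]_b) i :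
  (M *m v) i ord0 = dot (row i M)^T v.
Proof. by rewrite dotE mxE; apply: eq_bigr => j _; rewrite !mxE. Qed.

Lemma spec_ub (R : realType) a b (M : 'M[R]_(a, b)) :
  has_ubound [set enorm (M *m v) | v in [set v : 'cV[R]_b | enorm v <= 1]].
Proof.
exists (Num.sqrt (\sum_i dot (row i M)^T (row i M)^T)) => _ [v /= v1 <-].
rewrite /enorm ler_sqrt; last by rewrite sumr_ge0 // => i _; rewrite dot_ge0.
apply: ler_sum => i _; rewrite mulmx_entry.
apply: le_trans (cauchy_schwarz _ _) _.
rewrite ler_piMr ?dot_ge0 // -enorm_sq.
by rewrite expr_le1 // enorm_ge0.
Qed.

Lemma spec_bound (R : realType) a b (M : 'M[R]_(a, b)) (v : 'cV[R]_b) :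
  enorm (M *m v) <= spec_norm M * enorm v.
Proof.
have [v0|vn0] := eqVneq (enorm v) 0.
  have : dot v v = 0 by rewrite -enorm_sq v0 expr0n.
  by move/dot_eq0 => ->; rewrite mulmx0 !enormE !dot0l !sqrtr0 mulr0.
have vp : 0 < enorm v by rewrite lt_def vn0 enorm_ge0.
have H : enorm (M *m ((enorm v)^-1 *: v)) <= spec_norm M.
  apply: ub_le_sup; first exact: spec_ub.
  exists ((enorm v)^-1 *: v) => //=.
  by rewrite enormZ ger0_norm ?invr_ge0 ?enorm_ge0 // mulVf.
rewrite -scalemxAr enormZ ger0_norm ?invr_ge0 ?enorm_ge0 // in H.
by rewrite -ler_pdivrMr // mulrC.
Qed.


Lemma M0_tr (R : realType) n m p (A : 'M[R]_(p, n)) (B : 'M[R]_(p, m)) :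
  (M0 A B)^T = - M0 A B.
Proof.
rewrite /M0.
have -> : row_mx A B = (col_mx A^T B^T)^T by rewrite tr_col_mx !trmxK.
rewrite tr_block_mx opp_block_mx !trmx0 !oppr0 opprK.
by rewrite [(- _)^T]linearN /= trmxK.
Qed.

Lemma M0_skew (R : realType) n m p (A : 'M[R]_(p, n)) (B : 'M[R]_(p, m)) u v :
  dot (M0 A B *m u) v = - dot u (M0 A B *m v).
Proof. by rewrite dot_mulmx M0_tr mulNmx dotNr. Qed.

Lemma M0_skew0 (R : realType) n m p (A : 'M[R]_(p, n)) (B : 'M[R]_(p, m)) u :
  dot (M0 A B *m u) u = 0.
Proof.
have := M0_skew A B u u; rewrite (dotC u) => /eqP.
by rewrite -subr_eq0 opprK -mulr2n mulrn_eq0 /= => /eqP.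
Qed.

Lemma M0_col (R : realType) n m p (A : 'M[R]_(p, n)) (B : 'M[R]_(p, m)) (x : 'cV[R]_n) (z : 'cV[R]_m) (y : 'cV[R]_p) :
  M0 A B *m col_mx (col_mx x z) y =
  col_mx (col_mx (A^T *m y) (B^T *m y)) (- (A *m x + B *m z)).
Proof.
rewrite /M0 mul_block_col !mul0mx add0r addr0 mul_col_mx mulNmx.
by rewrite mul_row_col.
Qed.

Lemma lyap_step (R : realType) k (M : 'M[R]_k) (L eta : R) (e1 d0 d1 : 'cV[R]_k) :
  (forall u v, dot (M *m u) v = - dot u (M *m v)) ->
  (forall v, enorm (M *m v) <= L * enorm v) -> 0 < eta -> 0 < L ->
  dot (d1 + eta *: (M *m e1) + eta *: (M *m d0)) (e1 + d1) <= 0 ->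
  dot (e1 + d1) (e1 + d1) - 2 * eta * dot (M *m d1) (e1 + d1)
     + eta * L * dot d1 d1 + (1 - 2 * eta * L) * dot d1 d1
  <= dot e1 e1 - 2 * eta * dot (M *m d0) e1 + eta * L * dot d0 d0.
Proof.
move=> skew bnd etap Lp H.
have sk0 : forall u, dot (M *m u) u = 0.
  move=> u; have := skew u u; rewrite (dotC u) => /eqP.
  by rewrite -subr_eq0 opprK -mulr2n mulrn_eq0 /= => /eqP.
have Hb : 2 * `|dot (M *m d0) d1| <= L * (dot d0 d0 + dot d1 d1).
  apply: le_trans (ler_wpM2l _ (dot_le _ _)) _ => //.
  have := bnd d0 => b0; have := enorm_ge0 d1 => g1; have := enorm_ge0 d0 => g0.
  have := enorm_ge0 (M *m d0) => g2.
  rewrite -!enorm_sq.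
  have h1 : 0 <= (L * enorm d0 - enorm (M *m d0)) * enorm d1.
    by apply: mulr_ge0 => //; rewrite subr_ge0.
  have h2 : 0 <= L * (enorm d0 - enorm d1) ^+ 2 by rewrite mulr_ge0 ?sqr_ge0 ?ltW.
  nra.
have Hn := ler_norm (- dot (M *m d0) d1); rewrite normrN in Hn.
move: H; rewrite !dotDl !dotDr !dotZl !sk0.
rewrite (skew e1 d1) (dotC e1 (M *m d1)) (dotC e1 d1).
have := ler_wpM2l (ltW etap) Hb.
have := ler_wpM2l (ltW etap) Hn.
lra.
Qed.


Lemma le_small (R : realType) (x y c : R) : 0 <= c ->
  (forall t, 0 < t -> t <= 1 -> x <= y + t * c) -> x <= y.
Proof.
move=> c0 H; apply/ler_addgt0Pr => e e0.
pose t := Num.min 1 (e / (c + 1)).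
have t0 : 0 < t by rewrite lt_min ltr01 divr_gt0 // ltr_wpDl.
have t1 : t <= 1 by rewrite ge_min lexx.
apply: le_trans (H t t0 t1) _; rewrite lerD2l.
have : t <= e / (c + 1) by rewrite ge_min lexx orbT.
rewrite ler_pdivlMr ?ltr_wpDl // => h; nra.
Qed.

Local Open Scope ereal_scope.
Lemma prox_vi (R : realType) k (h : 'cV[R]_k -> \bar R) (eta : R) (w u : 'cV[R]_k) :
  proper_fun h -> convex_efun h -> (0 < eta)%R -> is_prox_point h eta w u ->
  h u \is a fin_num /\ forall v, h v \is a fin_num ->
    (dot (w - u) (v - u) <= eta * (fine (h v) - fine (h u)))%R.
Proof.
move=> [hN [x0 hx0]] hc etap Hp.
have hu : h u \is a fin_num.
  rewrite fin_numE hN /=; apply/negP => /eqP hu.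
  have := Hp x0; rewrite hu mulry gtr0_sg // mul1e addye //.
  by rewrite -(fineK hx0) -EFinM -EFinD leye_eq.
split => // v hv.
move: (fineK hu) (fineK hv); set a := fine (h u); set b := fine (h v) => ea eb.
apply: (@le_small _ _ _ (2^-1 * dot (v - u) (v - u))%R).
  by rewrite mulr_ge0 ?dot_ge0 // invr_ge0.
move=> t t0 t1.
pose u' := (t *: v + (1 - t) *: u)%R.
have hcu := hc v u t; rewrite t1 ltW //= in hcu.
have := hcu isT; rewrite -ea -eb -!EFinM -EFinD => hcu'.
have hu'fin : h u' \is a fin_num.
  by rewrite fin_numE hN /=; apply/negP => /eqP e; move: hcu'; rewrite /u' e leye_eq.
move: (fineK hu'fin); set c := fine (h u') => ec.
rewrite /u' -ec lee_fin in hcu'.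
have := Hp u'; rewrite -ea -ec -!EFinM -!EFinD lee_fin -!enorm_sq !enormE.
rewrite !sqr_sqrtr ?dot_ge0 // /u'.
have -> : (t *: v + (1 - t) *: u - w = (u - w) + t *: (v - u))%R.
  by rewrite scalerBl scale1r scalerBr; apply/matrixP => i j; rewrite !mxE; ring.
have -> : dot (w - u) (v - u) = (- dot (u - w) (v - u))%R.
  by rewrite -dotNl opprB.
set e := (u - w)%R; set d := (v - u)%R => H; clearbody e d.
rewrite dotDl !dotDr !dotZl !dotZr in H. rewrite (dotC d e) in H.
have Hs : (0 <= dot d d)%R by rewrite dot_ge0.
suff : (t * (- dot e d - (eta * (b - a) + t * (2^-1 * dot d d))) <= 0)%R.
  by rewrite pmulr_rle0 // subr_le0.
nra.
Qed.
Local Close Scope ereal_scope.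

Lemma enorm_eq0 (R : realType) k (v : 'cV[R]_k) : enorm v = 0 -> v = 0.
Proof. by move=> e; apply: dot_eq0; rewrite -enorm_sq e expr0n. Qed.

Lemma noninc_diff (R : realType) (u : nat -> R) :
  (forall k, u k.+1 <= u k) -> (forall k, 0 <= u k) ->
  forall e, 0 < e -> exists N, forall k, (N <= k)%N -> u k - u k.+1 <= e.
Proof.
move=> dec pos e e0.
have lb : has_lbound (range u) by exists 0 => _ [k _ <-].
have := nonincreasing_cvgn (iffLR (nonincreasing_seqP u) dec) lb.
move/cvgrPdist_le => /(_ (e / 2)); rewrite divr_gt0 // => /(_ isT) [N _ HN].
exists N => k Nk.
have h1 := HN k Nk; have h2 := HN k.+1 (leqW Nk).
rewrite /= in h1 h2.
move: h1 h2; set l := inf _; rewrite !ler_norml; lra.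
Qed.

Lemma entry_le_mxnorm (R : realType) a b (M : 'M[R]_(a, b)) i j : `|M i j| <= `|M|.
Proof.
change (`|M i j| <= mx_norm M); rewrite mx_normrE.
exact: (le_bigmax 0 (fun ij : 'I_a * 'I_b => `|M ij.1 ij.2|) (i, j)).
Qed.

Lemma cluster_exists (R : realType) k (V : nat -> 'cV[R]_k) (C : R) :
  (forall j, enorm (V j) <= C) ->
  exists vb, forall d, 0 < d -> forall N, exists j, (N <= j)%N /\ enorm (V j - vb) <= d.
Proof.
move=> HC.
pose rv := fun j => (V j)^T.
pose S := [set v : 'rV[R]_k | forall i, `[- C, C]%classic (v ord0 i)].
have cS : compact S.
  by apply: (@rV_compact _ _ (fun=> `[- C, C]%classic)) => i; exact: segment_compact.
have FS : (rv @ \oo) S.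
  exists 0%N => // j _ i /=; rewrite mxE in_itv /= -ler_norml.
  exact: le_trans (enorm_entry _ _) (HC j).
have [vr [_ cl]] := cS _ _ FS.
exists vr^T => d d0 N.
pose e := d / (k.+1)%:R.
have e0 : 0 < e by rewrite divr_gt0.
have ek : e * (k.+1)%:R = d by rewrite /e mulfVK.
clearbody e.
have FA : (rv @ \oo) (rv @` [set j | (N <= j)%N]).
  by exists N => // j Nj; exists j.
have [_ [[j Nj <-] hb]] := cl _ _ FA (nbhsx_ballx vr e e0).
exists j; split => //.
move: hb; rewrite mx_norm_ball /ball_ /= => hb.
rewrite /enorm -(ger0_norm (ltW d0)) -sqrtr_sqr ler_sqrt ?sqr_ge0 //.
apply: le_trans (_ : \sum_(i < k) e ^+ 2 <= _).
  apply: ler_sum => i _; rewrite !mxE -real_normK ?num_real //.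
  rewrite lerXn2r ?nnegrE ?normr_ge0 ?ltW //.
  apply: le_lt_trans hb; rewrite distrC.
  by have := entry_le_mxnorm (vr - rv j) ord0 i; rewrite /rv !mxE.
rewrite big_const_ord -ek.
have iE : forall q (x : R), iter q (+%R x) 0 = x *+ q by elim => //= q ih x; rewrite ih mulrS.
rewrite iE.
have kk : (k%:R : R) <= (k.+1)%:R ^+ 2.
  by rewrite -natrX ler_nat expnS; apply: leq_trans (leqnSn _) (leq_pmulr _ _); rewrite expn_gt0.
rewrite -mulr_natr exprMn mul1r -[e ^+ 2 *+ k]mulr_natr; apply: ler_wpM2l => //; exact: sqr_ge0.
Qed.

Lemma lsc_lim (R : realType) k (h : 'cV[R]_k -> \bar R) ub (r K0 : R) :
  lower_semicontinuous h -> (0 <= K0)%R ->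
  (forall d, (0 < d)%R -> (d <= 1)%R -> exists u, (enorm (u - ub) <= d)%R /\
       h u \is a fin_num /\ (fine (h u) <= r + K0 * d)%R) ->
  (h ub <= r%:E)%E.
Proof.
move=> lsc K0p H; rewrite leNgt; apply/negP => hr.
have [a [ra ah]] : exists a, (r < a)%R /\ (a%:E < h ub)%E.
  move: hr; case: (h ub) => [t| |] //.
  - rewrite lte_fin => rt; exists ((r + t) / 2)%R; split; rewrite ?lte_fin; lra.
  - by move=> _; exists (r + 1)%R; split; [lra | exact: ltry].
have [V hV HV] := lsc ub a ah.
have [e e0 he] := (nbhs_ballP _ _).1 hV.
pose d := Num.min (Num.min 1 (e / 2)) ((a - r) / (K0 + 1)).
have d0 : (0 < d)%R by rewrite !lt_min ltr01 !divr_gt0 //; lra.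
have d1 : (d <= 1)%R by rewrite !ge_min lexx.
have de : (d <= e / 2)%R by rewrite !ge_min lexx orbT.
have dK : (d <= (a - r) / (K0 + 1))%R by rewrite !ge_min lexx !orbT.
have [u [hu [hfin hle]]] := H d d0 d1.
have Vu : V u.
  apply: he; rewrite mx_norm_ball /ball_ /= -normrN opprB.
  apply: le_lt_trans (mxnorm_le_enorm _) _; apply: le_lt_trans hu _; lra.
have := HV u Vu; rewrite -(fineK hfin) lte_fin.
move: dK; rewrite ler_pdivlMr; last lra.
move=> dK; nra.
Qed.


Section Main.
Variables (R : realType) (n m p : nat) (f : 'cV[R]_n -> \bar R) (g : 'cV[R]_m -> \bar R)
  (A : 'M[R]_(p, n)) (B : 'M[R]_(p, m)) (c : 'cV[R]_p) (L eta : R)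
  (X : nat -> 'cV[R]_n) (Z : nat -> 'cV[R]_m) (Y : nat -> 'cV[R]_p).
Hypotheses (hf : pcc f) (hg : pcc g) (Lp : 0 < L) (hL : spec_norm (M0 A B) <= L)
  (etap : 0 < eta) (etaL : eta < (2 * L)^-1).
Hypothesis HX : forall k, is_prox_point f eta
      (X k.+1 - (2 * eta) *: (A^T *m Y k.+1) + eta *: (A^T *m Y k)) (X k.+2).
Hypothesis HZ : forall k, is_prox_point g eta
      (Z k.+1 - (2 * eta) *: (B^T *m Y k.+1) + eta *: (B^T *m Y k)) (Z k.+2).
Hypothesis HY : forall k, Y k.+2 = Y k.+1 + (2 * eta) *: (A *m X k.+1) + (2 * eta) *: (B *m Z k.+1)
                      - eta *: (A *m X k) - eta *: (B *m Z k) - eta *: c.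

Definition W k := col_mx (col_mx (X k) (Z k)) (Y k).
Definition D k := W k.+1 - W k.
Notation M := (M0 A B).

Definition Good (xs : 'cV[R]_n) (zs : 'cV[R]_m) (ys : 'cV[R]_p) :=
  [/\ f xs \is a fin_num, g zs \is a fin_num, A *m xs + B *m zs = c,
   (forall x, f x \is a fin_num -> fine (f xs) <= fine (f x) + dot (A^T *m ys) (x - xs)) &
   (forall z, g z \is a fin_num -> fine (g zs) <= fine (g z) + dot (B^T *m ys) (z - zs))].

Lemma Mbound v : enorm (M *m v) <= L * enorm v.
Proof. exact: le_trans (spec_bound _ _) (ler_wpM2r (enorm_ge0 _) hL). Qed.

Lemma col_sub k l (a c' : 'cV[R]_k) (b d : 'cV[R]_l) :
  col_mx a b - col_mx c' d = col_mx (a - c') (b - d).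
Proof. by rewrite opp_col_mx add_col_mx. Qed.

Lemma step_ineq xs zs ys : Good xs zs ys -> forall k,
  dot (D k.+1 + eta *: (M *m (W k.+1 - col_mx (col_mx xs zs) ys)) + eta *: (M *m D k))
      (W k.+2 - col_mx (col_mx xs zs) ys) <= 0.
Proof.
move=> [fx gz Hc Hf Hg] k.
case: hf => fp _ fc; case: hg => gp _ gc.
have [fX2 vx] := prox_vi fp fc etap (HX k).
have [gZ2 vz] := prox_vi gp gc etap (HZ k).
have ix := vx xs fx; have jx := Hf (X k.+2) fX2.
have iz := vz zs gz; have jz := Hg (Z k.+2) gZ2.
rewrite /D /W !col_sub !M0_col !scale_col_mx !add_col_mx !dot_col.
set xh := (X k.+1 - _ + _) in ix.
set zh := (Z k.+1 - _ + _) in iz.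
have -> : Y k.+2 - Y k.+1 + eta *: - (A *m (X k.+1 - xs) + B *m (Z k.+1 - zs)) +
    eta *: - (A *m (X k.+1 - X k) + B *m (Z k.+1 - Z k)) = 0.
  rewrite HY -Hc !mulmxBr; apply/matrixP => i j; rewrite !mxE; ring.
have -> : X k.+2 - X k.+1 + eta *: (A^T *m (Y k.+1 - ys)) + eta *: (A^T *m (Y k.+1 - Y k))
   = - (xh - X k.+2) - eta *: (A^T *m ys).
  rewrite /xh !mulmxBr; apply/matrixP => i j; rewrite !mxE; ring.
have -> : Z k.+2 - Z k.+1 + eta *: (B^T *m (Y k.+1 - ys)) + eta *: (B^T *m (Y k.+1 - Y k))
   = - (zh - Z k.+2) - eta *: (B^T *m ys).
  rewrite /zh !mulmxBr; apply/matrixP => i j; rewrite !mxE; ring.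
rewrite dot0l addr0 !dotBl !dotNl !dotZl.
have ex : dot (xh - X k.+2) (X k.+2 - xs) = - dot (xh - X k.+2) (xs - X k.+2).
  by rewrite -dotNr opprB.
have ez : dot (zh - Z k.+2) (Z k.+2 - zs) = - dot (zh - Z k.+2) (zs - Z k.+2).
  by rewrite -dotNr opprB.
rewrite ex ez.
have := ler_wpM2l (ltW etap) jx; have := ler_wpM2l (ltW etap) jz.
nra.
Qed.


Lemma Mdot2 a b : 2 * `|dot (M *m a) b| <= L * (dot a a + dot b b).
Proof.
apply: le_trans (ler_wpM2l _ (dot_le _ _)) _ => //.
have := Mbound a => b0; have := enorm_ge0 b => g1; have := enorm_ge0 a => g0.
have := enorm_ge0 (M *m a) => g2.
rewrite -!enorm_sq.
have h1 : 0 <= (L * enorm a - enorm (M *m a)) * enorm b.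
  by apply: mulr_ge0 => //; rewrite subr_ge0.
have h2 : 0 <= L * (enorm a - enorm b) ^+ 2 by rewrite mulr_ge0 ?sqr_ge0 ?ltW.
nra.
Qed.

Lemma etaL2 : eta * L < 2^-1.
Proof.
move: etaL; rewrite -div1r ltr_pdivlMr ?mulr_gt0 // => h.
rewrite -div1r ltr_pdivlMr //; lra.
Qed.

Definition Phi ws k := dot (W k.+1 - ws) (W k.+1 - ws)
  - 2 * eta * dot (M *m D k) (W k.+1 - ws) + eta * L * dot (D k) (D k).

Lemma Phi_lb ws k : (1 - eta * L) * dot (W k.+1 - ws) (W k.+1 - ws) <= Phi ws k.
Proof.
rewrite /Phi; have := Mdot2 (D k) (W k.+1 - ws).
have := ler_norm (dot (M *m D k) (W k.+1 - ws)).
have := dot_ge0 (D k); have := dot_ge0 (W k.+1 - ws).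
move=> h1 h2 h3 h4.
have := ler_wpM2l (ltW etap) h4; have := ler_wpM2l (ltW etap) h3.
have := etaL2; nra.
Qed.

Lemma Phi_ge0 ws k : 0 <= Phi ws k.
Proof.
apply: le_trans (Phi_lb ws k); apply: mulr_ge0; last exact: dot_ge0.
have := etaL2; lra.
Qed.

Lemma Phi_ub ws k : Phi ws k <= 2 * (dot (W k.+1 - ws) (W k.+1 - ws) + dot (D k) (D k)).
Proof.
rewrite /Phi; have := Mdot2 (D k) (W k.+1 - ws).
have := ler_norm (- dot (M *m D k) (W k.+1 - ws)); rewrite normrN.
have := dot_ge0 (D k); have := dot_ge0 (W k.+1 - ws).
move=> h1 h2 h3 h4.
have := ler_wpM2l (ltW etap) h4; have := ler_wpM2l (ltW etap) h3.
have := etaL2; have := mulr_gt0 etap Lp; nra.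
Qed.

Lemma Phi_step xs zs ys : Good xs zs ys -> forall k,
  Phi (col_mx (col_mx xs zs) ys) k.+1
    + (1 - 2 * eta * L) * dot (D k.+1) (D k.+1) <= Phi (col_mx (col_mx xs zs) ys) k.
Proof.
move=> G k; set ws := col_mx _ _.
have e : W k.+1 - ws + D k.+1 = W k.+2 - ws.
  by rewrite /D addrC addrA subrK.
have := @lyap_step _ _ M L eta (W k.+1 - ws) (D k) (D k.+1) (M0_skew A B) Mbound etap Lp.
rewrite e => H; have := H (step_ineq G k).
rewrite /Phi; lra.
Qed.

Lemma Phi_dec xs zs ys : Good xs zs ys -> forall i j, (i <= j)%N ->
  Phi (col_mx (col_mx xs zs) ys) j <= Phi (col_mx (col_mx xs zs) ys) i.
Proof.
move=> G i j /subnK <-; elim: (j - i)%N => [|q ih] //=.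
apply: le_trans ih; rewrite addSn.
have := Phi_step G (q + i); have := dot_ge0 (D (q + i).+1).
have := etaL2; nra.
Qed.

Lemma enorm_le_sq k (v : 'cV[R]_k) t : 0 <= t -> dot v v <= t ^+ 2 -> enorm v <= t.
Proof. by move=> t0 h; rewrite -(ler_pXn2r (n := 2)) ?nnegrE ?enorm_ge0 // enorm_sq. Qed.

Lemma D_small xs zs ys : Good xs zs ys ->
  forall e, 0 < e -> exists N, forall k, (N <= k)%N -> enorm (D k) <= e.
Proof.
move=> G e e0.
have dp : 0 < 1 - 2 * eta * L by have := etaL2; lra.
have [N HN] := noninc_diff (fun k => Phi_dec G (leqnSn k)) (Phi_ge0 _)
   (mulr_gt0 dp (exprn_gt0 2 e0)).
exists N.+1 => -[//|k] Nk.
apply: enorm_le_sq; first exact: ltW.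
have := HN k Nk; have := Phi_step G k.
move=> h1 h2.
have : (1 - 2 * eta * L) * dot (D k.+1) (D k.+1) <= (1 - 2 * eta * L) * e ^+ 2 by lra.
by rewrite ler_pM2l.
Qed.

Lemma W_bounded xs zs ys : Good xs zs ys -> exists C, forall j, enorm (W j.+1) <= C.
Proof.
move=> G; pose ws := col_mx (col_mx xs zs) ys.
exists (Num.sqrt (2 * Phi ws 0) + enorm ws) => j.
have -> : W j.+1 = (W j.+1 - ws) + ws by rewrite subrK.
apply: le_trans (enormD _ _) _; rewrite lerD2r.
apply: enorm_le_sq; first exact: sqrtr_ge0.
rewrite sqr_sqrtr; last by rewrite mulr_ge0 // Phi_ge0.
have := Phi_lb ws j; have := Phi_dec G (leq0n j); rewrite -/ws.
have := etaL2; have := dot_ge0 (W j.+1 - ws); nra.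
Qed.

Lemma conv_good xs zs ys : Good xs zs ys ->
  (forall d : R, 0 < d -> forall N, exists k, (N <= k)%N /\
     enorm (W k.+1 - col_mx (col_mx xs zs) ys) <= d) ->
  forall e, 0 < e -> exists N, forall j, (N <= j)%N ->
     enorm (W j.+1 - col_mx (col_mx xs zs) ys) <= e.
Proof.
move=> G fr e e0; pose ws := col_mx (col_mx xs zs) ys.
have e10 : 0 < e / 3 by rewrite divr_gt0.
have [ND HD] := D_small G e10.
have [k [Nk Hk]] := fr _ e10 ND; rewrite -/ws in Hk.
exists k => j kj; rewrite -/ws.
apply: enorm_le_sq; first exact: ltW.
have h1 := Phi_dec G kj; rewrite -/ws in h1; have h2 := Phi_lb ws j; have h3 := Phi_ub ws k.
have hd := HD k Nk.
have a1 : dot (W k.+1 - ws) (W k.+1 - ws) <= (e / 3) ^+ 2.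
  by rewrite -enorm_sq lerXn2r ?nnegrE ?enorm_ge0 ?(ltW e10).
have a2 : dot (D k) (D k) <= (e / 3) ^+ 2.
  by rewrite -enorm_sq lerXn2r ?nnegrE ?enorm_ge0 ?(ltW e10).
have := etaL2; have := dot_ge0 (W j.+1 - ws); have := mulr_gt0 etap Lp.
set q := e / 3; have eq : e = 3 * q by rewrite /q mulrC divfK.
rewrite eq; nra.
Qed.


Lemma enorm_col00 (y : 'cV[R]_p) : enorm (col_mx (col_mx (0 : 'cV[R]_n) (0 : 'cV[R]_m)) y) = enorm y.
Proof. by rewrite !enormE !dot_col !dot0l !add0r. Qed.

Lemma AT_bound y : enorm (A^T *m y) <= L * enorm y.
Proof.
have := Mbound (col_mx (col_mx 0 0) y); rewrite M0_col enorm_col00.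
apply: le_trans; apply: le_trans (enorm_colu _ _); exact: enorm_colu.
Qed.

Lemma BT_bound y : enorm (B^T *m y) <= L * enorm y.
Proof.
have := Mbound (col_mx (col_mx 0 0) y); rewrite M0_col enorm_col00.
apply: le_trans; apply: le_trans (enorm_colu _ _); exact: enorm_cold.
Qed.

Lemma AB_bound x z (y : 'cV[R]_p) :
  enorm (A *m x + B *m z) <= L * enorm (col_mx (col_mx x z) y).
Proof.
have := Mbound (col_mx (col_mx x z) y); rewrite M0_col.
by apply: le_trans; rewrite -enormN; exact: enorm_cold.
Qed.

Lemma small_zero (x K : R) : 0 <= K -> (forall d, 0 < d -> x <= K * d) -> x <= 0.
Proof.
move=> K0 H; apply/ler_addgt0Pr => e e0; rewrite add0r.
apply: le_trans (H (e / (K + 1)) _) _; first by rewrite divr_gt0 //; lra.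
rewrite mulrA ler_pdivrMr; last lra.
nra.
Qed.

Section cluster.
Variables (xb : 'cV[R]_n) (zb : 'cV[R]_m) (yb : 'cV[R]_p).
Let wb := col_mx (col_mx xb zb) yb.
Hypothesis SM : forall d, 0 < d -> exists k,
  [/\ enorm (W k.+2 - wb) <= d, enorm (D k.+1) <= d & enorm (D k) <= d].

Lemma W1_close k d : enorm (W k.+2 - wb) <= d -> enorm (D k.+1) <= d ->
  enorm (W k.+1 - wb) <= 2 * d.
Proof.
move=> h1 h2; have -> : W k.+1 - wb = (W k.+2 - wb) - D k.+1.
  by apply/matrixP => i j; rewrite /D !mxE; ring.
by apply: le_trans (enormB _ _) _; lra.
Qed.

Lemma cl_feas : A *m xb + B *m zb = c.
Proof.
apply/eqP; rewrite -subr_eq0; apply/eqP/enorm_eq0/eqP.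
rewrite eq_le enorm_ge0 andbT.
have ep : 0 < eta by [].
have Kp : 0 <= (1 + 3 * eta * L) / eta.
  by rewrite divr_ge0 ?ltW //; have := mulr_gt0 etap Lp; lra.
apply: (small_zero Kp) => d d0.
have [k [h1 h2 h3]] := SM d0.
have E : eta *: (A *m xb + B *m zb - c) = (Y k.+2 - Y k.+1)
   - eta *: (A *m (X k.+1 - X k) + B *m (Z k.+1 - Z k))
   - eta *: (A *m (X k.+1 - xb) + B *m (Z k.+1 - zb)).
  rewrite HY !mulmxBr; apply/matrixP => i j; rewrite !mxE; ring.
have b1 : enorm (Y k.+2 - Y k.+1) <= d.
  by apply: le_trans h2; rewrite /D /W col_sub; exact: enorm_cold.
have b2 : enorm (A *m (X k.+1 - X k) + B *m (Z k.+1 - Z k)) <= L * d.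
  apply: le_trans (AB_bound _ _ (Y k.+1 - Y k)) _.
  by rewrite -col_sub -col_sub; apply: ler_wpM2l => //; exact: ltW.
have b3 : enorm (A *m (X k.+1 - xb) + B *m (Z k.+1 - zb)) <= L * (2 * d).
  apply: le_trans (AB_bound _ _ (Y k.+1 - yb)) _.
  rewrite -col_sub -col_sub; apply: ler_wpM2l; first exact: ltW.
  exact: W1_close.
have : enorm (eta *: (A *m xb + B *m zb - c)) <= d + eta * (L * d) + eta * (L * (2 * d)).
  rewrite E; apply: le_trans (enormB _ _) _; apply: lerD.
    apply: le_trans (enormB _ _) _; apply: lerD => //.
    by rewrite enormZ (ger0_norm (ltW etap)) ler_pM2l.
  by rewrite enormZ (ger0_norm (ltW etap)) ler_pM2l.
rewrite enormZ (ger0_norm (ltW etap)) => H.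
rewrite mulrAC ler_pdivlMr //; nra.
Qed.


Lemma cl_fle x : f x \is a fin_num ->
  (f xb <= (fine (f x) + dot (A^T *m yb) (x - xb))%:E)%E.
Proof.
move=> fx; case: hf => fp fcl fc.
set nAy := enorm (A^T *m yb); set nxx := enorm (x - xb).
have LL := mulr_gt0 etap Lp.
have K0p : 0 <= nAy + (1 + 3 * eta * L) * (nxx + 1) / eta.
  apply: addr_ge0; first exact: enorm_ge0.
  apply: divr_ge0; last exact: ltW.
  apply: mulr_ge0; first lra.
  by have := enorm_ge0 (x - xb); rewrite -/nxx; lra.
apply: (@lsc_lim _ _ f xb _ _ fcl K0p) => d d0 d1.
have [k [h1 h2 h3]] := SM d0.
have [fX2 vx] := prox_vi fp fc etap (HX k).
have VI := vx x fx.
have hx2 : enorm (X k.+2 - xb) <= d.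
  move: h1; rewrite /W /wb !col_sub => h1.
  by apply: le_trans h1; apply: le_trans (enorm_colu _ _); exact: enorm_colu.
exists (X k.+2); split => //; split => //.
set xh := (X k.+1 - _ + _) in VI.
pose q := - (X k.+2 - X k.+1) - eta *: (A^T *m (Y k.+1 - yb)) - eta *: (A^T *m (Y k.+1 - Y k)).
have qE : xh - X k.+2 = q - eta *: (A^T *m yb).
  by rewrite /xh /q !mulmxBr; apply/matrixP => i j; rewrite !mxE; ring.
rewrite qE dotBl dotZl in VI.
have sp : dot (A^T *m yb) (x - X k.+2) =
    dot (A^T *m yb) (x - xb) + dot (A^T *m yb) (xb - X k.+2).
  rewrite -dotDr; congr dot; apply/matrixP => i j; rewrite !mxE; ring.
have b1 : dot (A^T *m yb) (xb - X k.+2) <= nAy * d.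
  apply: le_trans (dot_le' _ _) _; apply: ler_wpM2l; first exact: enorm_ge0.
  by rewrite -enormN opprB.
have e1 : enorm (X k.+2 - X k.+1) <= d.
  apply: le_trans h2; rewrite /D /W !col_sub.
  by apply: le_trans (enorm_colu _ _); exact: enorm_colu.
have e2 : enorm (A^T *m (Y k.+1 - yb)) <= L * (2 * d).
  apply: le_trans (AT_bound _) _; apply: ler_wpM2l; first exact: ltW.
  apply: le_trans (W1_close h1 h2); rewrite /W /wb col_sub; exact: enorm_cold.
have e3 : enorm (A^T *m (Y k.+1 - Y k)) <= L * d.
  apply: le_trans (AT_bound _) _; apply: ler_wpM2l; first exact: ltW.
  by apply: le_trans h3; rewrite /D /W col_sub; exact: enorm_cold.
have hq : enorm q <= (1 + 3 * eta * L) * d.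
  rewrite /q; apply: le_trans (enormB _ _) _.
  apply: le_trans (lerD (enormB _ _) (lexx _)) _.
  rewrite enormN !enormZ (ger0_norm (ltW etap)).
  have := ler_wpM2l (ltW etap) e2; have := ler_wpM2l (ltW etap) e3; lra.
have hxx2 : enorm (x - X k.+2) <= nxx + 1.
  have -> : x - X k.+2 = (x - xb) + (xb - X k.+2).
    by apply/matrixP => i j; rewrite !mxE; ring.
  apply: le_trans (enormD _ _) _; rewrite lerD2l -enormN opprB; lra.
have b2 : - dot q (x - X k.+2) <= (1 + 3 * eta * L) * d * (nxx + 1).
  apply: le_trans (ler_norm _) _; rewrite normrN.
  apply: le_trans (dot_le _ _) _; apply: ler_pM => //; exact: enorm_ge0.
rewrite -(ler_pM2l etap).
have -> : eta * (fine (f x) + dot (A^T *m yb) (x - xb) +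
     (nAy + (1 + 3 * eta * L) * (nxx + 1) / eta) * d) =
   eta * fine (f x) + eta * dot (A^T *m yb) (x - xb) + eta * nAy * d
   + (1 + 3 * eta * L) * d * (nxx + 1).
  by field; rewrite gt_eqF.
have := ler_wpM2l (ltW etap) b1.
rewrite sp in VI; lra.
Qed.

Lemma cl_gle z : g z \is a fin_num ->
  (g zb <= (fine (g z) + dot (B^T *m yb) (z - zb))%:E)%E.
Proof.
move=> gz; case: hg => gp gcl gc.
set nAy := enorm (B^T *m yb); set nxx := enorm (z - zb).
have LL := mulr_gt0 etap Lp.
have K0p : 0 <= nAy + (1 + 3 * eta * L) * (nxx + 1) / eta.
  apply: addr_ge0; first exact: enorm_ge0.
  apply: divr_ge0; last exact: ltW.
  apply: mulr_ge0; first lra.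
  by have := enorm_ge0 (z - zb); rewrite -/nxx; lra.
apply: (@lsc_lim _ _ g zb _ _ gcl K0p) => d d0 d1.
have [k [h1 h2 h3]] := SM d0.
have [fX2 vx] := prox_vi gp gc etap (HZ k).
have VI := vx z gz.
have hx2 : enorm (Z k.+2 - zb) <= d.
  move: h1; rewrite /W /wb !col_sub => h1.
  by apply: le_trans h1; apply: le_trans (enorm_colu _ _); exact: enorm_cold.
exists (Z k.+2); split => //; split => //.
set xh := (Z k.+1 - _ + _) in VI.
pose q := - (Z k.+2 - Z k.+1) - eta *: (B^T *m (Y k.+1 - yb)) - eta *: (B^T *m (Y k.+1 - Y k)).
have qE : xh - Z k.+2 = q - eta *: (B^T *m yb).
  by rewrite /xh /q !mulmxBr; apply/matrixP => i j; rewrite !mxE; ring.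
rewrite qE dotBl dotZl in VI.
have sp : dot (B^T *m yb) (z - Z k.+2) =
    dot (B^T *m yb) (z - zb) + dot (B^T *m yb) (zb - Z k.+2).
  rewrite -dotDr; congr dot; apply/matrixP => i j; rewrite !mxE; ring.
have b1 : dot (B^T *m yb) (zb - Z k.+2) <= nAy * d.
  apply: le_trans (dot_le' _ _) _; apply: ler_wpM2l; first exact: enorm_ge0.
  by rewrite -enormN opprB.
have e1 : enorm (Z k.+2 - Z k.+1) <= d.
  apply: le_trans h2; rewrite /D /W !col_sub.
  by apply: le_trans (enorm_colu _ _); exact: enorm_cold.
have e2 : enorm (B^T *m (Y k.+1 - yb)) <= L * (2 * d).
  apply: le_trans (BT_bound _) _; apply: ler_wpM2l; first exact: ltW.
  apply: le_trans (W1_close h1 h2); rewrite /W /wb col_sub; exact: enorm_cold.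
have e3 : enorm (B^T *m (Y k.+1 - Y k)) <= L * d.
  apply: le_trans (BT_bound _) _; apply: ler_wpM2l; first exact: ltW.
  by apply: le_trans h3; rewrite /D /W col_sub; exact: enorm_cold.
have hq : enorm q <= (1 + 3 * eta * L) * d.
  rewrite /q; apply: le_trans (enormB _ _) _.
  apply: le_trans (lerD (enormB _ _) (lexx _)) _.
  rewrite enormN !enormZ (ger0_norm (ltW etap)).
  have := ler_wpM2l (ltW etap) e2; have := ler_wpM2l (ltW etap) e3; lra.
have hxx2 : enorm (z - Z k.+2) <= nxx + 1.
  have -> : z - Z k.+2 = (z - zb) + (zb - Z k.+2).
    by apply/matrixP => i j; rewrite !mxE; ring.
  apply: le_trans (enormD _ _) _; rewrite lerD2l -enormN opprB; lra.
have b2 : - dot q (z - Z k.+2) <= (1 + 3 * eta * L) * d * (nxx + 1).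
  apply: le_trans (ler_norm _) _; rewrite normrN.
  apply: le_trans (dot_le _ _) _; apply: ler_pM => //; exact: enorm_ge0.
rewrite -(ler_pM2l etap).
have -> : eta * (fine (g z) + dot (B^T *m yb) (z - zb) +
     (nAy + (1 + 3 * eta * L) * (nxx + 1) / eta) * d) =
   eta * fine (g z) + eta * dot (B^T *m yb) (z - zb) + eta * nAy * d
   + (1 + 3 * eta * L) * d * (nxx + 1).
  by field; rewrite gt_eqF.
have := ler_wpM2l (ltW etap) b1.
rewrite sp in VI; lra.
Qed.

Lemma cl_good : Good xb zb yb.
Proof.
case: hf => [[fN [x0 fx0]] _ _]; case: hg => [[gN [z0 gz0]] _ _].
have fxb : f xb \is a fin_num.
  rewrite fin_numE fN /=; apply/negP => /eqP E.
  by have := cl_fle fx0; rewrite E leye_eq.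
have gzb : g zb \is a fin_num.
  rewrite fin_numE gN /=; apply/negP => /eqP E.
  by have := cl_gle gz0; rewrite E leye_eq.
split => //; first exact: cl_feas.
  by move=> x fx; have := cl_fle fx; rewrite -(fineK fxb) lee_fin.
by move=> z gz; have := cl_gle gz; rewrite -(fineK gzb) lee_fin.
Qed.

End cluster.

Lemma saddle_good : has_saddle_point f g A B c -> exists xs zs ys, Good xs zs ys.
Proof.
move=> [xs [zs [ys H]]].
case: hf => [[fN [x0 fx0]] _ _]; case: hg => [[gN [z0 gz0]] _ _].
have fxs : f xs \is a fin_num.
  rewrite fin_numE fN /=; apply/negP => /eqP E.
  have := (H x0 z0 ys).2; rewrite /lagr0 E addye ?gN // addye //.
  by rewrite -(fineK fx0) -(fineK gz0) -!EFinD leye_eq.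
have gzs : g zs \is a fin_num.
  rewrite fin_numE gN /=; apply/negP => /eqP E.
  have := (H x0 z0 ys).2; rewrite /lagr0 E addey ?fN // addye //.
  by rewrite -(fineK fx0) -(fineK gz0) -!EFinD leye_eq.
have fe : forall (a : 'cV[R]_p) b, ((a^T *m b) ord0 ord0) = dot a b by [].
set s := A *m xs + B *m zs - c.
have s0 : s = 0.
  have := (H xs zs (ys + s)).1; rewrite /lagr0 !fe -/s.
  rewrite -(fineK fxs) -(fineK gzs) -!EFinD lee_fin dotDl.
  move=> h; apply: dot_eq0; apply/eqP; rewrite eq_le dot_ge0 andbT; lra.
have Hc : A *m xs + B *m zs = c by apply/eqP; rewrite -subr_eq0 -/s s0.
exists xs, zs, ys; split => //.
  move=> x fx; have h := (H x zs ys).2; rewrite /lagr0 !fe -/s s0 dot0r in h.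
  rewrite -(fineK fxs) -(fineK gzs) -(fineK fx) -!EFinD lee_fin in h.
  have e : A *m x + B *m zs - c = A *m (x - xs).
    by rewrite -Hc mulmxBr; apply/matrixP => i j; rewrite !mxE; ring.
  rewrite e -(trmxK A) -dot_mulmx in h; lra.
move=> z gz; have h := (H xs z ys).2; rewrite /lagr0 !fe -/s s0 dot0r in h.
rewrite -(fineK fxs) -(fineK gzs) -(fineK gz) -!EFinD lee_fin in h.
have e : A *m xs + B *m z - c = B *m (z - zs).
  by rewrite -Hc mulmxBr; apply/matrixP => i j; rewrite !mxE; ring.
rewrite e -(trmxK B) -dot_mulmx in h; lra.
Qed.

Lemma good_sol xb zb yb : Good xb zb yb -> is_solution f g A B c xb zb.
Proof.
move=> [fxb gzb Hc Hf Hg]; split => // x z Hxz.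
case: hf => [[fN _] _ _]; case: hg => [[gN _] _ _].
have [fx|fx] := boolP (f x \is a fin_num); last first.
  move: fx; rewrite fin_numE fN /= negbK => /eqP ->; rewrite addye ?gN //; exact: leey.
have [gz|gz] := boolP (g z \is a fin_num); last first.
  move: gz; rewrite fin_numE gN /= negbK => /eqP ->; rewrite addey ?fN //; exact: leey.
rewrite -(fineK fxb) -(fineK gzb) -(fineK fx) -(fineK gz) -!EFinD lee_fin.
have h1 := Hf x fx; have h2 := Hg z gz.
have : dot (A^T *m yb) (x - xb) + dot (B^T *m yb) (z - zb) = 0.
  rewrite dotC (dotC (B^T *m yb)) -!dot_mulmx -dotDl.
  have -> : A *m (x - xb) + B *m (z - zb) = 0.
    rewrite !mulmxBr; apply/matrixP => i j; move: Hxz Hc.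
    move=> /matrixP /(_ i j) e1 /matrixP /(_ i j) e2; move: e1 e2; rewrite !mxE => e1 e2.
    rewrite -e2 in e1. lra.
  by rewrite dot0l.
lra.
Qed.

Lemma main_conv : has_saddle_point f g A B c -> exists xs zs,
  X @ \oo --> xs /\ Z @ \oo --> zs /\ is_solution f g A B c xs zs.
Proof.
move=> S; have [xs [zs [ys G]]] := saddle_good S.
have [C HC] := W_bounded G.
have [wb Hwb] := cluster_exists HC.
pose xb := usubmx (usubmx wb); pose zb := dsubmx (usubmx wb); pose yb := dsubmx wb.
have wbE : wb = col_mx (col_mx xb zb) yb by rewrite /xb /zb /yb !vsubmxK.
rewrite wbE in Hwb.
have SM : forall d, 0 < d -> exists k,
  [/\ enorm (W k.+2 - col_mx (col_mx xb zb) yb) <= d, enorm (D k.+1) <= d & enorm (D k) <= d].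
  move=> d d0; have [ND HD] := D_small G d0.
  have [[|k] [Nk Hk]] := Hwb d d0 ND.+1 => //.
  exists k; split => //; apply: HD => //; exact: leqW.
have Gb := cl_good SM.
have conv := conv_good Gb Hwb.
exists xb, zb; split; last split; last exact: good_sol Gb.
- apply/cvgrPdist_lt => e e0.
  have e2 : 0 < e / 2 by rewrite divr_gt0.
  have [N HN] := conv _ e2.
  exists N.+1 => // -[//|j] /= Nj.
  apply: le_lt_trans (mxnorm_le_enorm _) _.
  apply: le_lt_trans (_ : enorm (W j.+1 - col_mx (col_mx xb zb) yb) < e).
    rewrite -enormN opprB /W !col_sub.
    by apply: le_trans (enorm_colu _ _); exact: enorm_colu.
  by apply: le_lt_trans (HN j Nj) _; lra.
- apply/cvgrPdist_lt => e e0.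
  have e2 : 0 < e / 2 by rewrite divr_gt0.
  have [N HN] := conv _ e2.
  exists N.+1 => // -[//|j] /= Nj.
  apply: le_lt_trans (mxnorm_le_enorm _) _.
  apply: le_lt_trans (_ : enorm (W j.+1 - col_mx (col_mx xb zb) yb) < e).
    rewrite -enormN opprB /W !col_sub.
    by apply: le_trans (enorm_colu _ _); exact: enorm_cold.
  by apply: le_lt_trans (HN j Nj) _; lra.
Qed.

End Main.

Unset Implicit Arguments. Set Strict Implicit.

(* Sequences are shifted by one: X k = x_(k-1), so X 0 = x_(-1), X 1 = x_0. *)
Theorem corollary1 (R : realType) (n m p : nat)
    (f : 'cV[R]_n -> \bar R) (g : 'cV[R]_m -> \bar R)
    (A : 'M[R]_(p, n)) (B : 'M[R]_(p, m)) (c : 'cV[R]_p)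
    (L eta : R)
    (X : nat -> 'cV[R]_n) (Z : nat -> 'cV[R]_m) (Y : nat -> 'cV[R]_p) :
  pcc f -> pcc g ->
  has_saddle_point f g A B c ->
  0 < L -> spec_norm (M0 A B) <= L ->
  0 < eta -> eta < (2 * L)^-1 ->
  (forall k, is_prox_point f eta
      (X k.+1 - (2 * eta) *: (A^T *m Y k.+1) + eta *: (A^T *m Y k)) (X k.+2)) ->
  (forall k, is_prox_point g eta
      (Z k.+1 - (2 * eta) *: (B^T *m Y k.+1) + eta *: (B^T *m Y k)) (Z k.+2)) ->
  (forall k, Y k.+2 = Y k.+1 + (2 * eta) *: (A *m X k.+1) + (2 * eta) *: (B *m Z k.+1)
                      - eta *: (A *m X k) - eta *: (B *m Z k) - eta *: c) ->
  exists (xs : 'cV[R]_n) (zs : 'cV[R]_m),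
    X @ \oo --> xs /\ Z @ \oo --> zs /\ is_solution f g A B c xs zs.
Proof.
move=> hf hg S Lp hL etap etaL HX HZ HY.
by apply: (main_conv hf hg Lp hL etap etaL HX HZ HY S).
Qed.
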